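(* Let $(\mathcal V,\mathcal W,\lambda)$ be a FTvN system with center $C$, and let $D:\mathcal V\to\mathcal V$ be a doubly stochastic transformation that has an adjoint $D^*$. Then: (a) For every convex spectral set $K$, $D(K)\subseteq K$. (b) For every $u\in C$, $Du=u$ and $D^*u=u$. In particular, if $e$ is a unit element of the system, then $De=e$ and $D^*e=e$. (c) If $\mathcal V$ is finite dimensional, then $D^*x\prec x$ for all $x\in\mathcal V$.
   Context: A Fan-Theobald-von Neumann (FTvN) system is a triple $(\mathcal V,\mathcal W,\lambda)$ where $\mathcal V,\mathcal W$ are real inner product spaces and $\lambda:\mathcal V\to\mathcal W$ is a map such that: (A1) $\|\lambda(x)\|=\|x\|$ for all $x$; (A2) $\langle x,y\rangle\le\langle\lambda(x),\lambda(y)\rangle$ for all $x,y$; (A3) for every $c\in\mathcal V$ and $q\in\lambda(\mathcal V)$ there exists $x$ with $\lambda(x)=q$ and $\langle c,x\rangle=\langle\lambda(c),\lambda(x)\rangle$. The $\lambda$-orbit of $u$ is $[u]=\{z:\lambda(z)=\lambda(u)\}$; a set $E$ is spectral if $x\in E\Rightarrow [x]\subseteq E$. Majorization: $x\prec y$ iff $x\in\operatorname{conv}[y]$. A linear map $D:\mathcal V\to\mathcal V$ is doubly stochastic if $Dx\prec x$ for all $x\in\mathcal V$. The adjoint $D^*$ satisfies $\langle D^*x,y\rangle=\langle x,Dy\rangle$ for all $x,y$. Elements $x,y$ commute if $\langle x,y\rangle=\langle\lambda(x),\lambda(y)\rangle$; the center $C$ is the set of elements commuting with all of $\mathcal V$;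 a unit element is a nonzero $e$ with $C=\mathbb R e$. *)

(* Defs.v *)
From HB Require Import structures.
From mathcomp Require Import all_boot all_order all_algebra.
From mathcomp Require Import reals.
Set Implicit Arguments. Unset Strict Implicit. Unset Printing Implicit Defensive.
Import Order.TTheory GRing.Theory Num.Theory.
Local Open Scope ring_scope.

Record inner_product (R : realType) (V : lmodType R) := InnerProduct {
  ip :> V -> V -> R;
  ip_sym : forall x y, ip x y = ip y x;
  ip_linl : forall (a : R) (x y z : V), ip (a *: x + y) z = a * ip x z + ip y z;
  ip_ge0 : forall x, 0 <= ip x x;
  ip_eq0 : forall x, ip x x = 0 -> x = 0
}.

Definition ipnorm (R : realType) (V : lmodType R) (ipV : inner_product V) (x : V) : R :=
  Num.sqrt (ipV x x).

Section FTvN.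
Variables (R : realType) (V W : lmodType R).
Variables (ipV : inner_product V) (ipW : inner_product W) (lam : V -> W).

(* Fan-Theobald-von Neumann system axioms (A1)-(A3). *)
Definition FTvN_system : Prop :=
  (forall x, ipnorm ipW (lam x) = ipnorm ipV x) /\
  (forall x y, ipV x y <= ipW (lam x) (lam y)) /\
  (forall (c : V) (q : W), (exists v, lam v = q) ->
     exists x, lam x = q /\ ipV c x = ipW (lam c) (lam x)).

Definition orbit (u : V) : V -> Prop := fun z => lam z = lam u.

Definition spectral (E : V -> Prop) : Prop :=
  forall x, E x -> forall z, orbit x z -> E z.

Definition conv (E : V -> Prop) : V -> Prop := fun x =>
  exists (n : nat) (w : 'I_n -> R) (p : 'I_n -> V),
    (forall i, 0 <= w i) /\ \sum_i w i = 1 /\ (forall i, E (p i)) /\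
    x = \sum_i w i *: p i.

Definition convex (K : V -> Prop) : Prop :=
  forall x y (t : R), K x -> K y -> 0 <= t -> t <= 1 -> K (t *: x + (1 - t) *: y).

Definition majorized (x y : V) : Prop := conv (orbit y) x.

Definition doubly_stochastic (D : V -> V) : Prop :=
  forall x, majorized (D x) x.

Definition is_adjoint (D Dstar : V -> V) : Prop :=
  forall x y, ipV (Dstar x) y = ipV x (D y).

Definition commute (x y : V) : Prop := ipV x y = ipW (lam x) (lam y).

Definition center (u : V) : Prop := forall x, commute u x.

Definition unit_element (e : V) : Prop :=
  e <> 0 /\ (forall u, center u <-> exists t : R, u = t *: e).

End FTvN.

Definition finite_dimensional (R : realType) (V : lmodType R) : Prop :=
  exists (n : nat) (b : 'I_n -> V), forall x : V,
    exists c : 'I_n -> R, x = \sum_i c i *: b i.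

(* Main.v *)
Require Import Defs.
From HB Require Import structures.
From mathcomp Require Import all_boot all_order all_algebra.
From mathcomp Require Import reals.
From mathcomp Require Import boolp classical_sets topology normedtype matrix_normedtype derive.
From mathcomp Require Import ring lra.
Require Import Defs.
Import Order.TTheory GRing.Theory Num.Theory numFieldTopology.Exports numFieldNormedType.Exports.
Local Open Scope ring_scope.
Set Implicit Arguments. Unset Strict Implicit.

Section IP.
Variables (R : realType) (V : lmodType R) (ip : inner_product V).

Lemma ipDl x y z : ip (x + y) z = ip x z + ip y z.
Proof. by have := ip_linl ip 1 x y z; rewrite scale1r mul1r. Qed.
Lemma ip0l z : ip 0 z = 0.
Proof.
have h := ipDl 0 0 z; rewrite addr0 in h.
by apply: (addrI (ip 0 z)); rewrite addr0 -h.
Qed.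
Lemma ipZl a x z : ip (a *: x) z = a * ip x z.
Proof. by have := ip_linl ip a x 0 z; rewrite addr0 ip0l addr0. Qed.
Lemma ipNl x z : ip (- x) z = - ip x z.
Proof. by rewrite -scaleN1r ipZl mulN1r. Qed.
Lemma ipBl x y z : ip (x - y) z = ip x z - ip y z.
Proof. by rewrite ipDl ipNl. Qed.
Lemma ipDr x y z : ip z (x + y) = ip z x + ip z y.
Proof. by rewrite ip_sym ipDl !(ip_sym ip z). Qed.
Lemma ipZr a x z : ip z (a *: x) = a * ip z x.
Proof. by rewrite ip_sym ipZl (ip_sym ip z). Qed.
Lemma ipBr x y z : ip z (x - y) = ip z x - ip z y.
Proof. by rewrite ip_sym ipBl !(ip_sym ip z). Qed.
Lemma ipNr x z : ip z (- x) = - ip z x.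
Proof. by rewrite ip_sym ipNl (ip_sym ip z). Qed.
Lemma ip0r z : ip z 0 = 0.
Proof. by rewrite ip_sym ip0l. Qed.
Lemma ip_suml I (r : seq I) (P : pred I) (F : I -> V) z :
  ip (\sum_(i <- r | P i) F i) z = \sum_(i <- r | P i) ip (F i) z.
Proof. exact: (big_morph (fun x => ip x z) (fun x y => ipDl x y z) (ip0l z)). Qed.
Lemma ip_sumr I (r : seq I) (P : pred I) (F : I -> V) z :
  ip z (\sum_(i <- r | P i) F i) = \sum_(i <- r | P i) ip z (F i).
Proof. rewrite ip_sym ip_suml; apply: eq_bigr => i _; exact: ip_sym. Qed.

Definition ortho m (e : 'I_m -> V) := forall i j, ip (e i) (e j) = (i == j)%:R.
Definition expands m (e : 'I_m -> V) v := v = \sum_j ip v (e j) *: e j.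

Lemma coord_sum m (e : 'I_m -> V) (c : 'I_m -> R) (k : 'I_m) : ortho e ->
  ip (\sum_(j < m) c j *: e j) (e k) = c k.
Proof.
move=> oe; rewrite ip_suml (bigD1 k) //= ipZl oe eqxx mulr1 big1 ?addr0 //.
by move=> j /negbTE jk; rewrite ipZl oe jk mulr0.
Qed.

Lemma ip_expand m (e : 'I_m -> V) u v : expands e u ->
  ip u v = \sum_j ip u (e j) * ip v (e j).
Proof.
move=> eu; rewrite {1}eu ip_suml; apply: eq_bigr => j _.
by rewrite ipZl (ip_sym ip (e j)).
Qed.

Lemma gs (s : seq V) : exists m (e : 'I_m -> V), ortho e /\ forall v, v \in s -> expands e v.
Proof.
elim: s => [|u s [m [e [oe Hs]]]].
  by exists 0%N, (fun _ => 0); split => [[]|].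
set r := u - \sum_j ip u (e j) *: e j.
have r_ort j : ip r (e j) = 0 by rewrite /r ipBl coord_sum // subrr.
have span0 v : expands e v -> ip v r = 0.
  move=> ev; rewrite {1}ev ip_suml big1 // => j _.
  by rewrite ipZl (ip_sym ip (e j)) r_ort mulr0.
case: (eqVneq r 0) => [r0|rn0].
  exists m, e; split=> // v; rewrite inE => /orP [/eqP -> | /Hs //].
  by apply/eqP; rewrite -subr_eq0; apply/eqP; exact: r0.
pose nr := ip r r.
have nr0 : 0 < nr.
  rewrite lt_def ip_ge0 andbT; apply/eqP => /ip_eq0 h; by rewrite h eqxx in rn0.
pose en := (Num.sqrt nr)^-1 *: r.
have sq0 : Num.sqrt nr != 0 by rewrite gt_eqF // sqrtr_gt0.
have enen : ip en en = 1.
  rewrite /en ipZl ipZr mulrA -invfM -expr2 sqr_sqrtr ?ltW // mulVf //.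
  by rewrite gt_eqF.
pose e' := fun i : 'I_m.+1 => if unlift ord0 i is Some j then e j else en.
have e'l j : e' (lift ord0 j) = e j by rewrite /e' liftK.
have e'0 : e' ord0 = en by rewrite /e' unlift_none.
have en_ort j : ip (e j) en = 0 by rewrite /en ipZr ip_sym r_ort mulr0.
exists m.+1, e'; split.
  move=> i j; case: (unliftP ord0 i) => [i' ->|->]; case: (unliftP ord0 j) => [j' ->|->];
    rewrite ?e'l ?e'0.
  - by rewrite oe (inj_eq (@lift_inj _ ord0)).
  - by rewrite en_ort eq_sym (negbTE (neq_lift _ _)).
  - by rewrite ip_sym en_ort (negbTE (neq_lift _ _)).
  - by rewrite enen eqxx.
have ext v : ip v en = 0 -> expands e v -> expands e' v.
  move=> h ev; rewrite /expands big_ord_recl e'0 h scale0r add0r.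
  by under eq_bigr do rewrite e'l; exact: ev.
move=> v; rewrite inE => /orP [/eqP -> | /Hs ev]; last first.
  by apply: ext => //; rewrite /en ipZr span0 // mulr0.
rewrite /expands big_ord_recl e'0.
under eq_bigr do rewrite e'l.
have -> : ip u en *: en = r.
  rewrite /en ipZr scalerA.
  have -> : ip u r = nr.
    rewrite /nr {1}/r ipBl.
    have -> : ip (\sum_j ip u (e j) *: e j) r = 0.
      by rewrite span0 //; rewrite /expands; under [in RHS]eq_bigr do rewrite coord_sum //.
    by rewrite subr0 ip_sym -/r.
  rewrite mulrAC -invfM -expr2 sqr_sqrtr ?ltW // mulVf ?gt_eqF //.
  by rewrite scale1r.
by rewrite /r subrK.
Qed.


Lemma fd_basis : finite_dimensional V ->
  exists m (e : 'I_m -> V), ortho e /\ forall v, expands e v.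
Proof.
move=> [n [b Hb]].
have [m [e [oe He]]] := gs [seq b i | i <- enum 'I_n].
exists m, e; split=> // x.
have [c ->] := Hb x.
have eb i : expands e (b i) by apply: He; apply: map_f; rewrite mem_enum.
transitivity (\sum_i c i *: \sum_j ip (b i) (e j) *: e j).
  by apply: eq_bigr => i _; rewrite -eb.
under [RHS]eq_bigr do rewrite ip_suml scaler_suml.
rewrite exchange_big /=; apply: eq_bigr => i _; rewrite scaler_sumr.
by apply: eq_bigr => j _; rewrite ipZl scalerA.
Qed.

Lemma exists_argmin n (P : pred 'I_n) (F : 'I_n -> R) :
  (exists i, P i) -> exists k, P k /\ forall i, P i -> F k <= F i.
Proof.
move=> [i0 Pi0]; case: (arg_minP F Pi0) => k Pk Hk.
by exists k; split.
Qed.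

Lemma cara m (e : 'I_m -> V) (He : forall v, expands e v)
  (w : 'I_m.+2 -> R) (p : 'I_m.+2 -> V) :
  (forall i, 0 <= w i) -> \sum_i w i = 1 ->
  exists (w' : 'I_m.+1 -> R) (p' : 'I_m.+1 -> V),
    [/\ (forall i, 0 <= w' i), \sum_i w' i = 1, (forall i, exists k, p' i = p k) &
      \sum_i w' i *: p' i = \sum_i w i *: p i].
Proof.
move=> w0 w1.
pose A : 'M[R]_(m.+2, m.+1) :=
  \matrix_(i, j) (if unlift ord0 j is Some j' then ip (p i) (e j') else 1).
have nf : ~~ row_free A.
  apply/negP => /eqP h; have := rank_leq_col A; by rewrite h ltnn.
rewrite -kermx_eq0 in nf.
have [i0 Hi0] : exists i, row i (kermx A) != 0.
  case: (pickP (fun i => row i (kermx A) != 0)) => [i0 Hi0 | H0]; first by exists i0.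
  move: nf; rewrite (_ : kermx A = 0) ?eqxx //.
  by apply/row_matrixP => i; rewrite row0; apply/eqP; move: (H0 i) => /negbFE.
set mu := row i0 (kermx A) in Hi0.
have muA : mu *m A = 0 by rewrite /mu -row_mul mulmx_ker row0.
have sum_mu : \sum_i mu ord0 i = 0.
  have := congr1 (fun M : 'M[R]_(1, m.+1) => M ord0 ord0) muA; rewrite !mxE => h; rewrite -[RHS]h.
  by apply: eq_bigr => i _; rewrite [A i _]mxE unlift_none mulr1.
have sum_mup : \sum_i mu ord0 i *: p i = 0.
  rewrite {1}(He (\sum_i mu ord0 i *: p i)); apply: big1 => j _.
  have := congr1 (fun M : 'M[R]_(1, m.+1) => M ord0 (lift ord0 j)) muA; rewrite !mxE => h.
  suff -> : ip (\sum_i mu ord0 i *: p i) (e j) = 0 by rewrite scale0r.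
  rewrite ip_suml -[RHS]h; apply: eq_bigr => i _; by rewrite [A i _]mxE liftK ipZl.
have [i1 Hi1] : exists i, 0 < mu ord0 i.
  case: (pickP (fun i => 0 < mu ord0 i)) => [i1 Hi1|Hn]; first by exists i1. exfalso.
  have h : forall i, - mu ord0 i = 0.
    move=> i; apply: (@psumr_eq0P _ _ xpredT (fun i => - mu ord0 i)) => //.
      by move=> j _; rewrite oppr_ge0 leNgt Hn.
    by rewrite sumrN sum_mu oppr0.
  move/negP: Hi0; apply; apply/eqP/rowP => i; rewrite mxE.
  by move: (h i); rewrite !mxE => /eqP; rewrite oppr_eq0 => /eqP.
have [k [Pk Hk]] := @exists_argmin _ (fun i => 0 < mu ord0 i) (fun i => w i / mu ord0 i) (ex_intro _ i1 Hi1).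
set t := w k / mu ord0 k.
have t0 : 0 <= t by rewrite divr_ge0 // ltW.
pose w2 i := w i - t * mu ord0 i.
have w20 i : 0 <= w2 i.
  rewrite /w2 subr_ge0; case: (ltP 0 (mu ord0 i)) => hi.
    by rewrite -ler_pdivlMr //; apply: Hk.
  by apply: le_trans (w0 i); rewrite mulr_ge0_le0.
have w2k : w2 k = 0 by rewrite /w2 /t divfK ?subrr // gt_eqF.
have sw2 : \sum_i w2 i = 1.
  by rewrite /w2 sumrB -mulr_sumr sum_mu mulr0 subr0.
have sw2p : \sum_i w2 i *: p i = \sum_i w i *: p i.
  under eq_bigr do rewrite /w2 scalerBl -scalerA.
  by rewrite sumrB -scaler_sumr sum_mup scaler0 subr0.
exists (fun i => w2 (lift k i)), (fun i => p (lift k i)); split.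
- by move=> i; apply: w20.
- by move: sw2; rewrite (bigD1_ord k) //= w2k add0r.
- by move=> i; exists (lift k i).
- by rewrite -sw2p (bigD1_ord k (P := xpredT)) //= w2k scale0r add0r.
Qed.

End IP.


Section FT.
Variables (R : realType) (V W : lmodType R).
Variables (ipV : inner_product V) (ipW : inner_product W) (lam : V -> W).
Hypothesis hF : FTvN_system ipV ipW lam.

Lemma A1sq x : ipW (lam x) (lam x) = ipV x x.
Proof.
case: hF => h1 _; have := h1 x; rewrite /ipnorm => h.
by rewrite -(sqr_sqrtr (ip_ge0 ipW _)) h sqr_sqrtr // ip_ge0.
Qed.

Lemma lam_lip a b :
  ipW (lam a - lam b) (lam a - lam b) <= ipV (a - b) (a - b).
Proof.
case: hF => _ [h2 _]; have := h2 a b.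
rewrite !ipBl !ipBr !A1sq (ip_sym ipW (lam b)) (ip_sym ipV b) => h.
lra.
Qed.

Lemma conv_sub (K : V -> Prop) : convex K ->
  forall n (w : 'I_n -> R) (p : 'I_n -> V), (forall i, 0 <= w i) ->
  \sum_i w i = 1 -> (forall i, K (p i)) -> K (\sum_i w i *: p i).
Proof.
move=> cK; elim=> [|n IH] w p w0 w1 Kp.
  by move: w1; rewrite big_ord0 => /eqP; rewrite eq_sym oner_eq0.
rewrite big_ord_recl.
move: w1; rewrite big_ord_recl => w1.
set s := \sum_(i < n) w (lift ord0 i) in w1.
have s0 : 0 <= s by apply: sumr_ge0 => i _.
have hw : w ord0 = 1 - s by rewrite -w1 addrK.
case: (eqVneq s 0) => [se|sn].
  have z i : w (lift ord0 i) = 0.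
    by apply: (@psumr_eq0P _ _ xpredT (fun i => w (lift ord0 i))).
  rewrite big1 ?addr0; last by move=> i _; rewrite z scale0r.
  by rewrite hw se subr0 scale1r.
have sp : 0 < s by rewrite lt_def sn s0.
have Ky : K (\sum_(i < n) (w (lift ord0 i) / s) *: p (lift ord0 i)).
  apply: IH => //.
    by move=> i; rewrite divr_ge0.
  by rewrite -mulr_suml mulfV.
have -> : \sum_(i < n) w (lift ord0 i) *: p (lift ord0 i) =
          (1 - w ord0) *: \sum_(i < n) (w (lift ord0 i) / s) *: p (lift ord0 i).
  rewrite hw opprB addrC subrK scaler_sumr; apply: eq_bigr => i _.
  by rewrite scalerA mulrC divfK.
apply: cK => //; rewrite hw; lra.
Qed.

Lemma ds_center (D : V -> V) : doubly_stochastic lam D ->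
  forall u, center ipV ipW lam u -> D u = u.
Proof.
move=> hD u cu; have [n [w [p [w0 [w1 [Op ->]]]]]] := hD u.
have pu i : p i = u.
  apply/eqP; rewrite -subr_eq0; apply/eqP; apply: (@ip_eq0 _ _ ipV).
  have e1 : ipV (p i) (p i) = ipV u u by rewrite -A1sq (Op i) A1sq.
  have e2 : ipV u (p i) = ipV u u by rewrite (cu (p i)) (Op i) A1sq.
  rewrite ipBl !ipBr e1 (ip_sym ipV (p i)) e2; lra.
under eq_bigr do rewrite pu.
by rewrite -scaler_suml w1 scale1r.
Qed.

Lemma ds_center_adj (D Dstar : V -> V) : doubly_stochastic lam D ->
  is_adjoint ipV D Dstar -> forall u, center ipV ipW lam u -> Dstar u = u.
Proof.
move=> hD adj u cu.
have key z : ipV (Dstar u) z = ipV u z.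
  rewrite adj; have [n [w [p [w0 [w1 [Op ->]]]]]] := hD z.
  rewrite ip_sumr; under eq_bigr do rewrite ipZr (cu (p _)) (Op _) -(cu z).
  by rewrite -mulr_suml w1 mul1r.
apply/eqP; rewrite -subr_eq0; apply/eqP; apply: (@ip_eq0 _ _ ipV).
by rewrite ipBl key subrr.
Qed.

Lemma ds_adj_bound (D Dstar : V -> V) : doubly_stochastic lam D ->
  is_adjoint ipV D Dstar -> forall x c, ipV c (Dstar x) <= ipW (lam c) (lam x).
Proof.
move=> hD adj x c; rewrite ip_sym adj.
have [n [w [p [w0 [w1 [Op ->]]]]]] := hD c.
rewrite ip_sumr -[X in _ <= X]mul1r -w1 mulr_suml; apply: ler_sum => i _.
rewrite ipZr; apply: ler_wpM2l; first exact: w0.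
case: hF => _ [h2 _]; apply: le_trans (h2 x (p i)) _.
by rewrite (Op i) ip_sym.
Qed.

End FT.

Local Open Scope classical_set_scope.

Lemma closed_approx (R : realType) n (A : set 'rV[R]_n) :
  (forall v : 'rV[R]_n, (forall e, 0 < e -> exists v' : 'rV[R]_n, A v' /\
     forall k, `|v ord0 k - v' ord0 k| < e) -> A v) -> closed A.
Proof.
move=> H v clv; apply: H => e e0.
have [v' [Av' bv']] := clv _ (nbhsx_ballx v e e0).
exists v'; split=> // k.
by move: bv'; rewrite /ball /=; case=> _ /(_ ord0 k); rewrite /ball /=.
Qed.

Lemma bounded_by (R : realType) n (A : set 'rV[R]_n) (r : R) :
  (forall v : 'rV[R]_n, A v -> forall k, `|v ord0 k| <= r) -> bounded_set A.
Proof.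
move=> H; suff : \forall M \near +oo, forall v, A v -> `|v| <= M by [].
have rr : Num.max 0 r \is Num.real by rewrite num_real.
near=> M => v /= Av.
have hM : Num.max 0 r <= M by near: M; apply: nbhs_pinfty_ge.
rewrite [leLHS]mx_normrE; apply/bigmax_leP; split.
  by move: hM; rewrite ge_max => /andP[].
move=> [i k] _ /=; rewrite (ord1 i); apply: le_trans (H _ Av k) _.
by move: hM; rewrite ge_max => /andP[].
Unshelve. all: by end_near.
Qed.

Lemma cont_sum (R : realType) K n (F : 'I_n -> 'rV[R]_K -> R) :
  (forall i, continuous (F i)) -> continuous (fun v => \sum_i F i v).
Proof.
elim: n F => [|n IH] F Fc.
  by move=> v; under eq_fun do rewrite big_ord0; apply: cst_continuous.
move=> v; under eq_fun do rewrite big_ord_recr /=.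
apply: continuousD; last exact: Fc.
exact: (IH (fun i => F (widen_ord (leqnSn n) i))).
Qed.

Lemma le_eps (R : realType) (a : R) : 0 <= a -> (forall eps, 0 < eps -> a <= eps) -> a = 0.
Proof.
move=> a0 H; apply/eqP; rewrite eq_le a0 andbT leNgt; apply/negP => ap.
have := H (a / 2) (divr_gt0 ap (ltr0Sn _ _)); lra.
Qed.

Lemma var_lemma (R : realType) (a B : R) : 0 <= B ->
  (forall t, 0 < t -> t <= 1 -> 2 * t * a <= t * t * B) -> a <= 0.
Proof.
move=> B0 H; rewrite leNgt; apply/negP => ap.
have aB : 0 < a + B by lra.
pose t := a / (a + B).
have t0 : 0 < t by rewrite divr_gt0.
have t1 : t <= 1 by rewrite ler_pdivrMr // mul1r; lra.
have e : t * (a + B) = a by rewrite divfK ?gt_eqF.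
have := H t t0 t1.
have ta : 0 < t * a by rewrite mulr_gt0.
have tta : 0 < t * (t * a) by rewrite mulr_gt0.
have e2 : t * t * B = t * a - t * (t * a).
  by rewrite -{1}e; ring.
rewrite e2; lra.
Qed.

Section Key.
Variables (R : realType) (V W : lmodType R).
Variables (ipV : inner_product V) (ipW : inner_product W) (lam : V -> W).
Hypothesis hF : FTvN_system ipV ipW lam.

Lemma key_maj : finite_dimensional V -> forall x y : V,
  (forall c, ipV c y <= ipW (lam c) (lam x)) -> majorized lam y x.
Proof.
move=> fd x y hy.
have [m [e [oe He]]] := fd_basis ipV fd.
pose X (v : 'rV[R]_(m.+1 * m.+1)) (i j : 'I_m.+1) := v ord0 (mxvec_index i j).
pose wt v i := X v i ord0.
pose pt v i := \sum_(j < m) X v i (lift ord0 j) *: e j.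
pose comb v := \sum_(i < m.+1) wt v i *: pt v i.
pose A := [set v : 'rV[R]_(m.+1 * m.+1) | (forall i, 0 <= wt v i) /\
   \sum_i wt v i = 1 /\ forall i, lam (pt v i) = lam x].
pose dd v (j : 'I_m) := ipV y (e j) - \sum_i wt v i * X v i (lift ord0 j).
pose F v := \sum_j dd v j * dd v j.
pose enc (w : 'I_m.+1 -> R) (p : 'I_m.+1 -> V) : 'rV[R]_(m.+1 * m.+1) :=
  mxvec (\matrix_(i, j) (if unlift ord0 j is Some j' then ipV (p i) (e j') else w i)).
have enc_w w p i : wt (enc w p) i = w i by rewrite /wt /X /enc mxvecE mxE unlift_none.
have enc_p w p i : pt (enc w p) i = p i.
  rewrite [RHS](He (p i)) /pt /X /enc; apply: eq_bigr => j _.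
  by rewrite mxvecE mxE liftK.
have ptc v i j : ipV (pt v i) (e j) = X v i (lift ord0 j) by rewrite coord_sum.
have Fval v : F v = ipV (y - comb v) (y - comb v).
  rewrite (ip_expand _ (He (y - comb v))) /F; apply: eq_bigr => j _.
  suff -> : ipV (y - comb v) (e j) = dd v j by [].
  rewrite ipBl /comb ip_suml /dd; congr (_ - _); apply: eq_bigr => i _.
  by rewrite ipZl ptc.
have Xc i j : continuous (fun v => X v i j).
  exact: (@coord_continuous _ 1 (m.+1 * m.+1) ord0 (mxvec_index i j)).
have Fc : continuous F.
  rewrite /F. refine (@cont_sum R (m.+1 * m.+1) m (fun j v => dd v j * dd v j) _) => j.
  have ddc : continuous (fun v => dd v j).
    move=> v; apply: continuousB; first exact: cst_continuous.
    refine (@cont_sum R (m.+1 * m.+1) m.+1 (fun i v => wt v i * X v i (lift ord0 j)) _ v) => i.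
    move=> v'; apply: (continuousM (s := fun v => wt v i) (t := fun v => X v i (lift ord0 j))).
      exact: Xc.
    exact: Xc.
  move=> v; exact: (continuousM (s := fun v => dd v j) (t := fun v => dd v j) (ddc v) (ddc v)).
have mpos : 0 < (m.+1)%:R :> R by rewrite ltr0Sn.
have Acl : closed A.
  apply: closed_approx => v Hv; split; [|split].
  - move=> i; rewrite leNgt; apply/negP => hneg.
    have hp : 0 < - wt v i by rewrite oppr_gt0.
    have [vv [[w0v _] h]] := Hv _ hp.
    move: (h (mxvec_index i ord0)) (w0v i) hneg; rewrite /wt /X.
    move: (v ord0 _) (vv ord0 _) => a b; rewrite ltr_norml => /andP[h1 h2] hb ha.
    lra.
  - apply/eqP; rewrite -subr_eq0 -normr_eq0; apply/eqP; apply: le_eps => // eps eps0.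
    have q0 : 0 < eps / (m.+1)%:R by rewrite divr_gt0.
    have [v' [[_ [s1' _]] h]] := Hv _ q0.
    rewrite -s1' -sumrB; apply: le_trans (ler_norm_sum _ _ _) _.
    apply: le_trans (_ : \sum_(i < m.+1) eps / (m.+1)%:R <= eps).
      by apply: ler_sum => i _; apply: ltW; exact: h.
    by rewrite sumr_const card_ord -(mulr_natr (eps / (m.+1)%:R)) divfK ?gt_eqF.
  - move=> i.
    have hz : ipW (lam (pt v i) - lam x) (lam (pt v i) - lam x) = 0.
      apply: le_eps; first exact: ip_ge0.
      move=> eps eps0.
      pose q := eps / (m.+1)%:R.
      have q0 : 0 < q by rewrite divr_gt0.
      pose d := Num.min 1 q.
      have d0 : 0 < d by rewrite lt_min ltr01 q0.
      have d1 : d <= 1 by rewrite ge_min lexx.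
      have dq : d <= q by rewrite ge_min lexx orbT.
      have [v' [[_ [_ l']] h]] := Hv _ d0.
      rewrite -(l' i); apply: le_trans (lam_lip hF _ _) _.
      rewrite (ip_expand _ (He _)).
      apply: le_trans (_ : \sum_(j < m) q <= eps).
        apply: ler_sum => j _; rewrite ipBl !ptc.
        move: (h (mxvec_index i (lift ord0 j))); rewrite /X.
        move: (v ord0 _) (v' ord0 _) => a b; rewrite ltr_norml => /andP[h1 h2].
        nra.
      rewrite sumr_const card_ord.
      have : q *+ m.+1 = eps by rewrite -(mulr_natr q) divfK ?gt_eqF.
      rewrite mulrS; lra.
    by apply/eqP; rewrite -subr_eq0; apply/eqP; apply: (@ip_eq0 _ _ ipW).
have xx0 : 0 <= ipV x x := ip_ge0 _ x.
have Abd : bounded_set A.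
  apply: (@bounded_by _ _ _ (1 + ipV x x)) => v [w0' [w1' l']] k.
  case/mxvec_indexP: k => i j.
  case: (unliftP ord0 j) => [j' ->|->].
  - have : X v i (lift ord0 j') * X v i (lift ord0 j') <= ipV x x.
      rewrite -(A1sq hF) -(l' i) (A1sq hF) (ip_expand _ (He _)).
      under [in X in _ <= X]eq_bigr do rewrite ptc.
      rewrite (bigD1 j') //= lerDl; apply: sumr_ge0 => k _.
      by rewrite -expr2 sqr_ge0.
    rewrite /X; move: (v ord0 _) => a ha.
    case: (lerP 0 a) => h0; [rewrite ger0_norm // | rewrite ltr0_norm //]; nra.
  - have hw0 := w0' i; have hw1 : wt v i <= 1.
      rewrite -w1' (bigD1 i) //= lerDl; exact: sumr_ge0.
    move: hw0 hw1; rewrite /wt /X; move: (v ord0 _) => a h0 h1.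
    rewrite ger0_norm //; lra.
have A0 : A !=set0.
  exists (enc (fun i => (i == ord0)%:R) (fun _ => x)); split; [|split].
  - by move=> i; rewrite enc_w ler0n.
  - under eq_bigr do rewrite enc_w.
    by rewrite (bigD1 ord0) //= big1 ?addr0 // => i /negbTE ->.
  - by move=> i; rewrite enc_p.
have Acp := bounded_closed_compact Abd Acl.
have [c cA cmin] := EVT_min_rV A0 Acp (continuous_subspaceT Fc).
move/set_mem: cA => [cw0 [cw1 cl]].
set z := comb c.
have var s : lam s = lam x -> forall t, 0 < t -> t <= 1 ->
   F c <= ipV (y - (t *: s + (1 - t) *: z)) (y - (t *: s + (1 - t) *: z)).
  move=> ls t t0 t1.
  pose Wt (i : 'I_m.+2) := if unlift ord0 i is Some j then (1 - t) * wt c j else t.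
  pose Pt (i : 'I_m.+2) := if unlift ord0 i is Some j then pt c j else s.
  have Wt0 i : 0 <= Wt i.
    rewrite /Wt; case: (unlift ord0 i) => [j|]; last exact: ltW.
    apply: mulr_ge0; [lra | exact: cw0].
  have Wt1 : \sum_i Wt i = 1.
    rewrite big_ord_recl /Wt unlift_none.
    under eq_bigr do rewrite liftK.
    rewrite -mulr_sumr cw1 mulr1; lra.
  have [w' [p' [w'0 w'1 p'P w'p]]] := @cara _ _ _ _ _ He Wt Pt Wt0 Wt1.
  have encA : A (enc w' p').
    split; [|split].
    - by move=> i; rewrite enc_w.
    - by under eq_bigr do rewrite enc_w.
    - move=> i; rewrite enc_p; have [k ->] := p'P i.
      rewrite /Pt; case: (unlift ord0 k) => [j|] //; exact: cl.
  have := cmin _ (mem_set encA); rewrite (Fval (enc w' p')).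
  suff -> : comb (enc w' p') = t *: s + (1 - t) *: z by [].
  rewrite /comb; under eq_bigr do rewrite enc_w enc_p.
  rewrite w'p big_ord_recl /Wt /Pt unlift_none.
  under eq_bigr do rewrite liftK.
  rewrite /z /comb scaler_sumr; congr (_ + _); apply: eq_bigr => i _.
  by rewrite scalerA.
rewrite Fval -/z in var.
set c0 := y - z.
have [s [ls hs]] : exists s, lam s = lam x /\ ipV c0 s = ipW (lam c0) (lam s).
  by case: hF => _ [_ h3]; apply: h3; exists x.
have hcs : ipV c0 (s - z) <= 0.
  apply: (@var_lemma _ _ (ipV (s - z) (s - z))); first exact: ip_ge0.
  move=> t t0 t1; have := var s ls t t0 t1.
  rewrite /c0 !(ipBl, ipBr, ipDl, ipDr, ipZl, ipZr, ipNl, ipNr).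
  rewrite ?(ip_sym ipV s y) ?(ip_sym ipV z y) ?(ip_sym ipV z s).
  lra.
have hyc := hy c0; rewrite -ls -hs in hyc.
have c00 : c0 = 0.
  apply: (@ip_eq0 _ _ ipV); apply/eqP; rewrite eq_le ip_ge0 andbT.
  have -> : ipV c0 c0 = ipV c0 y - ipV c0 z by rewrite {3}/c0 ipBr.
  move: hcs; rewrite ipBr; lra.
have yz : y = z by apply/eqP; rewrite -subr_eq0 -/c0 c00.
exists m.+1, (wt c), (pt c); split; first exact: cw0.
split; first exact: cw1.
split; first exact: cl.
exact: yz.
Qed.
End Key.

Local Close Scope classical_set_scope.

Theorem proposition9p2 (R : realType) (V W : lmodType R)
  (ipV : inner_product V) (ipW : inner_product W) (lam : V -> W)
  (D : {linear V -> V}) (Dstar : V -> V) :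
  FTvN_system ipV ipW lam ->
  doubly_stochastic lam D ->
  is_adjoint ipV D Dstar ->
  (forall K : V -> Prop, convex K -> spectral lam K -> forall x, K x -> K (D x)) /\
  (forall u, center ipV ipW lam u -> D u = u /\ Dstar u = u) /\
  (forall e, unit_element ipV ipW lam e -> D e = e /\ Dstar e = e) /\
  (finite_dimensional V -> forall x, majorized lam (Dstar x) x).
Proof.
move=> hF hD adj.
have hc : forall u, center ipV ipW lam u -> D u = u /\ Dstar u = u.
  move=> u cu; split; first exact: (ds_center hF hD cu).
  exact: (ds_center_adj hD adj cu).
split; [|split; [|split]].
- move=> K cK sK x Kx; have [n [w [p [w0 [w1 [Op ->]]]]]] := hD x.
  apply: (conv_sub cK) => // i; exact: (sK x Kx (p i) (Op i)).
- exact: hc.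
- move=> e [e0 He]; apply: hc; apply/He; exists 1; by rewrite scale1r.
- move=> fd x; apply: (key_maj hF fd); exact: (ds_adj_bound hF hD adj x).
Qed.
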